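(* Let $H$ be a GCDs-monoid. Then for every $a\in H$ there exist $b\in H$ and $c\in\mathrm{Sqf}\,H$ such that $a=bc$ and, for every $d\in\mathrm{Sqf}\,H$, if $d\mid a$ then $d\mid c$.
   Context: A monoid means a commutative cancellative monoid (written multiplicatively); $H^{\ast}$ is its unit group. $\mathrm{Sqf}\,H$ is the set of elements of $H$ not of the form $b^2c$ with $b,c\in H$, $b\notin H^{\ast}$. $H$ is a GCDs-monoid if every subset of $H$ has a greatest common divisor in $H$. *)

(* Defs.v *)
Set Implicit Arguments.

(* A monoid = commutative cancellative monoid, written multiplicatively. *)
Record ccmonoid := CCMonoid {
  carrier :> Type;
  mul : carrier -> carrier -> carrier;
  one : carrier;
  mulA : forall x y z, mul x (mul y z) = mul (mul x y) z;
  mulC : forall x y, mul x y = mul y x;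
  mul1 : forall x, mul one x = x;
  mulK : forall x y z, mul x y = mul x z -> y = z
}.

Arguments mul {c}.
Arguments one {c}.

Section Defs.
Variable H : ccmonoid.

Definition is_unit (u : H) : Prop := exists v : H, mul u v = one.

Definition divides (d a : H) : Prop := exists e : H, a = mul d e.

Definition squarefree (a : H) : Prop :=
  ~ (exists b c : H, ~ is_unit b /\ a = mul (mul b b) c).

Definition is_gcd (S : H -> Prop) (g : H) : Prop :=
  (forall x, S x -> divides g x) /\
  (forall d, (forall x, S x -> divides d x) -> divides d g).

Definition GCDs_monoid : Prop :=
  forall S : H -> Prop, (exists x, S x) -> exists g, is_gcd S g.
End Defs.

Arguments is_unit {H}.
Arguments divides {H}.
Arguments squarefree {H}.
Arguments is_gcd {H}.

(* Main.v *)
Require Import Defs.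
From Stdlib Require Import Classical.

Section S.
Variable H : ccmonoid.
Local Notation "x * y" := (mul x y).
Lemma mA (x y z : H) : x * (y * z) = (x * y) * z. Proof. apply mulA. Qed.
Lemma mC (x y : H) : x * y = y * x. Proof. apply mulC. Qed.
Lemma m1 (x : H) : one * x = x. Proof. apply mul1. Qed.
Lemma mK (x y z : H) : x * y = x * z -> y = z. Proof. apply mulK. Qed.

Lemma mulCA (x y z : H) : x * (y * z) = y * (x * z).
Proof. rewrite !mA, (mC x y). reflexivity. Qed.

Lemma mul1r (x : H) : x * one = x.
Proof. rewrite mC; apply m1. Qed.

Lemma dv_refl (a : H) : divides a a.
Proof. exists one; now rewrite mul1r. Qed.

Lemma dv_trans (a b c : H) : divides a b -> divides b c -> divides a c.
Proof. intros [u ->] [v ->]. exists (u * v). now rewrite mA. Qed.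

Lemma dv_mulr (d a b : H) : divides d a -> divides d (a * b).
Proof. intros [u ->]. exists (u * b). now rewrite mA. Qed.

Lemma dv_mull (d a b : H) : divides d b -> divides d (a * b).
Proof. intros h; rewrite mC; now apply dv_mulr. Qed.

Lemma dv_mul2 (d e a b : H) : divides d a -> divides e b -> divides (d * e) (a * b).
Proof. intros [u ->] [v ->]. exists (u * v).
  rewrite <- !mA. f_equal. apply mulCA. Qed.

Lemma dv_cancel (c d e : H) : divides (c * d) (c * e) -> divides d e.
Proof. intros [f Hf]. exists f. rewrite <- mA in Hf. now apply mK in Hf. Qed.

Lemma unit_dv (u x : H) : is_unit u -> divides u x.
Proof. intros [v Hv]. exists (v * x). now rewrite mA, Hv, m1. Qed.

Lemma dv_self_unit (d x : H) : divides (d * x) d -> is_unit x.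
Proof. intros [e He]. exists e. apply (mK d). rewrite mA, <- He. symmetry; apply mul1r. Qed.

Hypothesis hH : GCDs_monoid H.

Lemma gcd2 (a b : H) : exists g, divides g a /\ divides g b /\
  forall e, divides e a -> divides e b -> divides e g.
Proof.
  destruct (hH (fun x => x = a \/ x = b)) as [g [H1 H2]].
  - exists a; now left.
  - exists g. split; [apply H1; now left|]. split; [apply H1; now right|].
    intros e ea eb. apply H2. intros x [->| ->]; assumption.
Qed.

Definition coprime (a b : H) := forall e, divides e a -> divides e b -> is_unit e.

Lemma euclid (a b z : H) : coprime a b -> divides a (b * z) -> divides a z.
Proof.
  intros cab hab.
  destruct (gcd2 (z * a) (z * b)) as [h [h1 [h2 h3]]].
  assert (zh : divides z h) by (apply h3; apply dv_mulr, dv_refl).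
  destruct zh as [w ->].
  assert (wu : is_unit w) by (apply cab; eapply dv_cancel; eassumption).
  destruct wu as [v Hv].
  assert (ah : divides a (z * w)).
  { apply h3. apply dv_mull, dv_refl. rewrite mC; assumption. }
  replace z with ((z * w) * v). now apply dv_mulr.
  now rewrite <- mA, Hv, mul1r.
Qed.

Lemma gcd_split (d x : H) : exists h d' x', d = h * d' /\ x = h * x' /\ coprime d' x'.
Proof.
  destruct (gcd2 d x) as [h [[d' Hd] [[x' Hx] h3]]].
  exists h, d', x'. split; [assumption|]. split; [assumption|].
  intros e ed ex. apply (dv_self_unit h).
  apply h3; [rewrite Hd | rewrite Hx]; apply dv_mul2; auto using dv_refl.
Qed.

Lemma lemA (d x y : H) : squarefree d -> divides d ((x * x) * y) -> divides d (x * y).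
Proof.
  intros sq hd.
  destruct (gcd_split d x) as [h [d' [x' [-> [-> c1]]]]].
  assert (E1 : (h * x') * (h * x') * y = h * (x' * (x' * (h * y)))).
  { rewrite <- !mA. f_equal. rewrite (mulCA h x'). f_equal. }
  rewrite E1 in hd. apply dv_cancel in hd.
  apply euclid in hd; [| exact c1]. apply euclid in hd; [| exact c1].
  destruct (gcd_split d' h) as [k [d'' [h' [-> [-> c2]]]]].
  rewrite <- mA in hd; apply dv_cancel in hd. apply euclid in hd; [| exact c2].
  assert (ku : is_unit k).
  { apply NNPP. intro nk. apply sq. exists k, (h' * d''). split; [exact nk|].
    rewrite <- !mA. f_equal. rewrite !mA. f_equal. apply mC. }
  rewrite <- (mA (k * h') x' y). apply dv_mul2; [apply dv_refl|].
  apply dv_mul2; [apply unit_dv; exact ku | exact hd].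
Qed.

Lemma one_sqf : squarefree (one : H).
Proof.
  intros [b [c [nb E]]]. apply nb. exists (b * c).
  rewrite mA. symmetry. exact E.
Qed.

Lemma main (a : H) : exists (b c : H),
    squarefree c /\ a = mul b c /\
    (forall d : H, squarefree d -> divides d a -> divides d c).
Proof.
  set (T := fun d : H => squarefree d /\ divides d a).
  destruct (hH (fun m => forall d, T d -> divides d m)) as [L [L1 L2]].
  - exists a. intros d [_ h]. exact h.
  - assert (La : divides L a) by (apply L1; intros d [_ h]; exact h).
    destruct La as [b Hb].
    exists b, L. split; [|split].
    + intros [x [y [nx E]]]. apply nx.
      assert (hxy : divides L (x * y)).
      { apply L1. intros d [sd da]. apply lemA; [exact sd|].
        rewrite <- E. apply L2. intros m hm. apply hm. split; assumption. }
      destruct hxy as [e He].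
      rewrite E in He. exists e.
      apply (mK (x * y)). rewrite mul1r.
      transitivity (x * x * y * e); [|symmetry; exact He].
      rewrite <- !mA. f_equal. rewrite (mulCA y x). reflexivity.
    + rewrite mC. exact Hb.
    + intros d sd da. apply L2. intros m hm. apply hm. split; assumption.
Qed.
End S.

Theorem proposition4p5 (H : ccmonoid) (hH : GCDs_monoid H) (a : H) :
  exists (b c : H),
    squarefree c /\ a = mul b c /\
    (forall d : H, squarefree d -> divides d a -> divides d c).
Proof. exact (@main H hH a). Qed.
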